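(* Let $n\ge2$, let $\mathbb{A}=(A_{ij})_{i,j=1}^n$ be an operator matrix as in the context, and assume that for all $i\ne j$ there are constants $c_{ij},d_{ij}\ge0$ with $\|A_{ij}x_j\|_{X_i}\le c_{ij}\|A_{jj}x_j\|_{X_j}+d_{ij}\|x_j\|_{X_j}$ for all $x_j\in\mathcal{D}(A_{jj})$ and $\sum_{i=1,i\ne j}^nc_{ij}<1$ for every $j$. Let $\mathfrak{I}_0$ be the set of those $m\in\{1,\ldots,n\}$ for which there exists a permutation $\pi$ of $\{1,\ldots,n\}$ with (1) $\pi(m)=n$ and (2) $\sigma(A_{\pi^{-1}(k),\pi^{-1}(k)})\cup\sigma(\mathbb{A}(\pi)_k)\ne\mathbb{C}$ for all $k\in\{2,\ldots,n-1\}$. Then $\sigma(\mathbb{A})\subset\bigcap_{m\in\mathfrak{I}_0}S_m(\mathbb{A})$.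
   Context: Let $X_1,\ldots,X_n$ be complex Banach spaces and $X=X_1\times\cdots\times X_n$ with norm $\|x\|=\sum_i\|x_i\|_{X_i}$. For $i,j$, $A_{ij}:\mathcal{D}(A_{ij})\subset X_j\to X_i$ are linear, $A_{ii}$ closed, and for $i\ne j$ $\mathcal{D}(A_{jj})\subset\mathcal{D}(A_{ij})$. $\mathbb{A}=(A_{ij})$ acts on $\mathcal{D}(A_{11})\times\cdots\times\mathcal{D}(A_{nn})$ by $(\mathbb{A}x)_i=\sum_jA_{ij}x_j$. For a permutation $\pi$, $\mathbb{A}(\pi):=(A_{\pi^{-1}(i),\pi^{-1}(j)})_{i,j=1}^n$ acts on $X_{\pi^{-1}(1)}\times\cdots\times X_{\pi^{-1}(n)}$ with domain $\prod_i\mathcal{D}(A_{\pi^{-1}(i),\pi^{-1}(i)})$, and $\mathbb{A}(\pi)_k$ is its upper-left $k\times k$ block with domain $\prod_{i=1}^k\mathcal{D}(A_{\pi^{-1}(i),\pi^{-1}(i)})$. $\sigma(S)$ is the set of $\lambda$ for which $\lambda-S$ is not bijective from $\mathcal{D}(S)$ with bounded inverse. For $j\ne k$ and $\lambda\notin\sigma(A_{kk})\cup\sigma(A_{jj})$, $\mathcal{R}_{kj}(\lambda):=\sum_{i=1,i\ne k}^n\|(A_{ik}(\lambda-A_{kk})^{-1}A_{kj}+(1-\delta_{ij})A_{ij})(\lambda-A_{jj})^{-1}\|$; $S_{kj}(\mathbb{A}):=\sigma(A_{kk})\cup\sigma(A_{jj})\cup\{\lambda\notin\sigma(A_{kk})\cup\sigma(A_{jj}):\mathcal{R}_{kj}(\lambda)\ge1\}$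 and $S_k(\mathbb{A}):=\bigcup_{j\ne k}S_{kj}(\mathbb{A})$. *)

(* Defs.v *)
(* complex Banach spaces are modelled as
   complete normed modules over C := R[i] (R : realType). *)
From HB Require Import structures.
From mathcomp Require Import all_boot all_order all_algebra all_fingroup.
From mathcomp Require Import all_classical all_reals all_analysis.
From mathcomp Require Import complex.
Import Order.TTheory GRing.Theory Num.Theory.
Import numFieldNormedType.Exports.


Local Open Scope ring_scope.
Local Open Scope classical_set_scope.

Section OperatorMatrix.
Variable R : realType.
Local Notation C := (R[i]).

Definition lin_on (X Y : normedModType C) (A : X -> Y) (D : set X) : Prop :=
  D 0 /\
  (forall (a : C) x y, D x -> D y -> D (a *: x + y)) /\
  (forall (a : C) x y, D x -> D y -> A (a *: x + y) = a *: A x + A y).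

(** A (possibly unbounded) operator with domain [D] is closed: its graph is
    closed in X x X (sequential characterisation, valid in metric spaces). *)
Definition closed_op (X : normedModType C) (A : X -> X) (D : set X) : Prop :=
  forall (u : nat -> X) (x y : X), (forall k, D (u k)) ->
    u @ \oo --> x -> (A \o u) @ \oo --> y -> D x /\ A x = y.

Definition spec1 (X : normedModType C) (A : X -> X) (D : set X) : set C :=
  [set lam | ~ [/\ (forall x y, D x -> D y -> lam *: x - A x = lam *: y - A y -> x = y),
                  (forall y, exists2 x, D x & lam *: x - A x = y) &
                  (exists c : C, forall x, D x -> `|x| <= c * `|lam *: x - A x|)]].

(** Spectrum of the operator matrix (B_ij)_{i,j in K} acting on the product
    of the Y_i, i in K, with norm sum_i ||x_i||, on the domain prod_{i in K} D_i. *)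
Definition mspec (I : finType) (Y : I -> normedModType C)
    (B : forall i j, Y j -> Y i) (D : forall i, set (Y i)) (K : pred I) : set C :=
  let dom (x : forall i, Y i) := forall i, K i -> D i (x i) in
  let app lam (x : forall i, Y i) i := lam *: x i - \sum_(j | K j) B i j (x j) in
  let nrm (x : forall i, Y i) := \sum_(i | K i) `|x i| in
  [set lam | ~ [/\ (forall x y, dom x -> dom y ->
                       (forall i, K i -> app lam x i = app lam y i) ->
                       forall i, K i -> x i = y i),
                  (forall y : forall i, Y i, exists2 x, dom x &
                       forall i, K i -> app lam x i = y i) &
                  (exists c : C, forall x, dom x ->
                       nrm x <= c * \sum_(i | K i) `|app lam x i|)]].

(** The resolvent (lambda - A)^{-1} (meaningful when lambda is not in spec1). *)
Definition resolv (X : normedModType C) (A : X -> X) (D : set X) (lam : C) (y : X) : X :=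
  xget 0 [set x | D x /\ lam *: x - A x = y].

Definition opnorm (X Y : normedModType C) (T : X -> Y) : \bar R :=
  @ereal_sup R [set (complex.Re `|T x|)%:E | x in [set x : X | `|x| <= 1]].

End OperatorMatrix.
Arguments lin_on {R X Y} A D.
Arguments closed_op {R X} A D.
Arguments spec1 {R X} A D.
Arguments mspec {R I Y} B D K.
Arguments resolv {R X} A D lam y.
Arguments opnorm {R X Y} T.

Section OperatorMatrix2.
Variable R : realType.
Local Notation C := (R[i]).
Variables (n : nat) (X : 'I_n -> normedModType C)
  (A : forall i j : 'I_n, X j -> X i) (D : forall i j : 'I_n, set (X j)).

Definition Dd (i : 'I_n) : set (X i) := D i i.

Definition sigmaA : set C := mspec A Dd predT.

(** sigma(A(pi)_k): upper-left k x k block of the permuted matrix. *)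
Definition sigmaAperm (p : {perm 'I_n}) (k : nat) : set C :=
  @mspec R _ (fun i => X ((p^-1)%g i))
    (fun i j => A ((p^-1)%g i) ((p^-1)%g j))
    (fun i => Dd ((p^-1)%g i)) (fun i : 'I_n => (val i < k)%N).

Definition Rkj (k j : 'I_n) (lam : C) : \bar R :=
  (\sum_(i < n | i != k)
     opnorm (fun y : X j => (
       A i k (resolv (A k k) (Dd k) lam (A k j (resolv (A j j) (Dd j) lam y)))
       + (i != j)%:R *: A i j (resolv (A j j) (Dd j) lam y))%R))%E.

Definition Skj (k j : 'I_n) : set C :=
  spec1 (A k k) (Dd k) `|` spec1 (A j j) (Dd j) `|`
  [set lam | ~ spec1 (A k k) (Dd k) lam /\ ~ spec1 (A j j) (Dd j) lam /\
             (1 <= Rkj k j lam)%E].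

Definition Sk (k : 'I_n) : set C := \bigcup_(j in [set j | j != k]) Skj k j.

(** The index set I_0 (0-based indices: positions 1..n become 0..n-1). *)
Definition I0 : set 'I_n :=
  [set m | exists p : {perm 'I_n},
     val (p m) = n.-1 /\
     forall k : nat, (2 <= k <= n.-1)%N -> forall q : 'I_n, val q = k.-1 ->
       spec1 (A ((p^-1)%g q) ((p^-1)%g q)) (Dd ((p^-1)%g q)) `|` sigmaAperm p k
         != setT].

End OperatorMatrix2.
Arguments Dd {R n X} D i.
Arguments sigmaA {R n X} A D.
Arguments sigmaAperm {R n X} A D p k.
Arguments Rkj {R n X} A D k j lam.
Arguments Skj {R n X} A D k j.
Arguments Sk {R n X} A D k.
Arguments I0 {R n X} A D.

(* Main.v *)
Require Import Defs.
From HB Require Import structures.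
From mathcomp Require Import all_boot all_order all_algebra all_fingroup.
From mathcomp Require Import all_classical all_reals all_analysis.
From mathcomp Require Import complex.
From mathcomp Require Import ring lra.
Import Order.TTheory GRing.Theory Num.Theory.
Import numFieldNormedType.Exports.
Local Open Scope ring_scope.
Local Open Scope classical_set_scope.

Section Norms.
Context {R : realType}.
Local Notation C := R[i].

Lemma Im_norm {V : normedModType C} (x : V) : complex.Im `|x| = 0.
Proof. exact: ger0_Im. Qed.

Lemma normCE {V : normedModType C} (x : V) : `|x| = real_complex R (complex.Re `|x|).
Proof. by case E: `|x| => [a b]; have := Im_norm x; rewrite E /= => ->. Qed.

Lemma Re_le {a b : C} : a <= b -> complex.Re a <= complex.Re b.
Proof. by rewrite lecE => /andP[]. Qed.

Lemma NN_ge0 {V : normedModType C} (x : V) : 0 <= complex.Re `|x|.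
Proof. by have := Re_le (normr_ge0 x); rewrite raddf0. Qed.

Lemma NN_add {V : normedModType C} (x y : V) :
  complex.Re `|x + y| <= complex.Re `|x| + complex.Re `|y|.
Proof. by have := Re_le (ler_normD x y); rewrite raddfD. Qed.

Lemma NN_Z {V : normedModType C} (a : C) (x : V) :
  complex.Re `|a *: x| = complex.Re `|a| * complex.Re `|x|.
Proof.
rewrite normrZ (normCE x).
by case: `|a| => p q; rewrite /= mulr0 subr0.
Qed.

Lemma NN_N {V : normedModType C} (x : V) : complex.Re `|- x| = complex.Re `|x|.
Proof. by rewrite normrN. Qed.

Lemma NN_eq0 {V : normedModType C} (x : V) : complex.Re `|x| <= 0 -> x = 0.
Proof.
move=> h; apply/normr0_eq0; rewrite normCE.
have -> : complex.Re `|x| = 0 by apply/eqP; rewrite eq_le h NN_ge0.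
by [].
Qed.

Lemma NN_sum {V : normedModType C} (I : Type) (r : seq I) (P : pred I) (F : I -> V) :
  complex.Re `|\sum_(i <- r | P i) F i| <= \sum_(i <- r | P i) complex.Re `|F i|.
Proof. have := Re_le (ler_norm_sum r F P). move=> h. rewrite -(raddf_sum (@complex.Re R)). exact h. Qed.

Lemma le_C (a b : C) : complex.Im a = 0 -> complex.Im b = 0 ->
  complex.Re a <= complex.Re b -> a <= b.
Proof. by move=> ha hb h; rewrite lecE ha hb eqxx. Qed.

Lemma NN_sub {V : normedModType C} (x y : V) : complex.Re `|x - y| = complex.Re `|y - x|.
Proof. by rewrite -normrN opprB. Qed.

End Norms.

Section Res.
Variable R : realType.
Local Notation C := R[i].
Local Notation N x := (complex.Re `|x|).
Variables (V : normedModType C) (T : V -> V) (Dm : set V) (lam : C).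
Hypothesis hlin : lin_on T Dm.
Hypothesis hsp : ~ spec1 T Dm lam.

Let triple : [/\ (forall x y, Dm x -> Dm y -> lam *: x - T x = lam *: y - T y -> x = y),
                  (forall y, exists2 x, Dm x & lam *: x - T x = y) &
                  (exists c : C, forall x, Dm x -> `|x| <= c * `|lam *: x - T x|)].
Proof. by apply: contrapT. Qed.

Lemma res_spec y : Dm (resolv T Dm lam y) /\ lam *: resolv T Dm lam y - T (resolv T Dm lam y) = y.
Proof.
case: triple => _ hs _; rewrite /resolv.
have [x dx ex] := hs y.
exact: (@xgetPex _ 0 [set x | Dm x /\ lam *: x - T x = y] (ex_intro _ x (conj dx ex))).
Qed.

Lemma res_dom y : Dm (resolv T Dm lam y). Proof. by case: (res_spec y). Qed.
Lemma res_eq y : lam *: resolv T Dm lam y - T (resolv T Dm lam y) = y.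
Proof. by case: (res_spec y). Qed.

Lemma res_inv x : Dm x -> resolv T Dm lam (lam *: x - T x) = x.
Proof.
move=> dx; case: triple => hi _ _; apply: hi => //; first exact: res_dom.
by rewrite res_eq.
Qed.

Lemma lin_sub_aux (a : C) x y : Dm x -> Dm y ->
  lam *: (a *: x + y) - T (a *: x + y) = a *: (lam *: x - T x) + (lam *: y - T y).
Proof.
move=> dx dy; case: hlin => _ [_ hT]; rewrite hT //.
by rewrite scalerDr !scalerBr !scalerA mulrC; rewrite addrACA opprD.
Qed.

Lemma res_lin (a : C) u v :
  resolv T Dm lam (a *: u + v) = a *: resolv T Dm lam u + resolv T Dm lam v.
Proof.
case: hlin => _ [hD _].
rewrite -{1}(res_eq u) -{1}(res_eq v) -lin_sub_aux; try exact: res_dom.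
by rewrite res_inv //; apply: hD; exact: res_dom.
Qed.

Lemma res_bound : exists c : R, 0 <= c /\ forall y, N (resolv T Dm lam y) <= c * N y.
Proof.
case: triple => _ _ [c hc]; exists `|complex.Re c|; split => // y.
have := Re_le (hc _ (res_dom y)); rewrite res_eq => h.
apply: (le_trans h); rewrite (normCE y).
case: c {hc h} => a b /=; rewrite mulr0 subr0.
by apply: ler_wpM2r; [exact: NN_ge0 | exact: ler_norm].
Qed.

End Res.

Lemma near_ex (P : nat -> Prop) N : (\forall t \near \oo, P t) -> exists t, (N <= t)%N /\ P t.
Proof. move=> h. have := filter_ex (filterI (nbhs_infty_ge N) h). by move=> [t [h1 h2]]; exists t. Qed.

Lemma geo_small {R : realType} (q K e : R) : 0 <= q -> q < 1 -> 0 < e ->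
  exists t, K * q ^+ t < e.
Proof.
move=> q0 q1 e0; have [K0|K0] := lerP K 0.
  exists 0%N; rewrite expr0 mulr1; exact: (le_lt_trans K0 e0).
have hq : `|q| < 1 by rewrite ger0_norm.
have /cvgrPdist_lt /(_ (e / K)) := cvg_expr hq.
rewrite divr_gt0 // => /(_ isT) /(near_ex _ 0) [t [_ ht]]; exists t.
rewrite sub0r normrN ger0_norm ?exprn_ge0 // in ht.
by rewrite -ltr_pdivlMl // mulrC.
Qed.

Section Neumann.
Context {R : realType}.
Local Notation C := R[i].
Local Notation N x := (complex.Re `|x|).
Variables (n : nat) (P : pred 'I_n) (X : 'I_n -> completeNormedModType C)
  (T : forall i j, X j -> X i) (L : 'I_n -> 'I_n -> R) (q : R).
Hypothesis hT : forall i j (a : C) u v, T i j (a *: u + v) = a *: T i j u + T i j v.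
Hypothesis hL : forall i j u, P i -> P j -> N (T i j u) <= L i j * N u.
Hypothesis hL0 : forall i j, P i -> P j -> 0 <= L i j.
Hypothesis hq : forall j, P j -> \sum_(i | P i) L i j <= q.
Hypothesis hq0 : 0 <= q.
Hypothesis hq1 : q < 1.
Variable b : forall i, X i.

Lemma T_sub i j u v : T i j (u - v) = T i j u - T i j v.
Proof. by rewrite addrC -scaleN1r hT scaleN1r addrC. Qed.

Definition Phi (w : forall i, X i) : forall i, X i :=
  fun i => b i + \sum_(j | P j) T i j (w j).
Definition it t := iter t Phi (fun i => 0).
Definition S (w w' : forall i, X i) := \sum_(i | P i) N (w i - w' i).

Lemma S_ge0 w w' : 0 <= S w w'.
Proof. by apply: sumr_ge0 => i _; exact: NN_ge0. Qed.

Lemma term_le_S w w' i : P i -> N (w i - w' i) <= S w w'.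
Proof.
move=> Pi; rewrite /S (bigD1 i) //= lerDl.
by apply: sumr_ge0 => j _; exact: NN_ge0.
Qed.

Lemma Phi_contr w w' : S (Phi w) (Phi w') <= q * S w w'.
Proof.
have h1 i : P i -> N (Phi w i - Phi w' i) <= \sum_(j | P j) L i j * N (w j - w' j).
  move=> Pi; rewrite /Phi opprD addrACA subrr add0r -sumrB.
  apply: le_trans; first exact: NN_sum.
  apply: ler_sum => j Pj.
  by rewrite -T_sub; exact: hL.
apply: (le_trans (ler_sum _ h1)); rewrite exchange_big /= /S mulr_sumr.
apply: ler_sum => j Pj; rewrite -mulr_suml; apply: ler_wpM2r; first exact: NN_ge0.
exact: hq.
Qed.

Let M := S (it 1) (it 0).
Let E := M / (1 - q).

Lemma E_ge0 : 0 <= E.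
Proof. by rewrite /E divr_ge0 ?S_ge0 // subr_ge0 ltW. Qed.

Lemma it_step t : S (it t.+1) (it t) <= q ^+ t * M.
Proof.
elim: t => [|t IH]; first by rewrite expr0 mul1r.
rewrite /it !iterS; apply: (le_trans (Phi_contr _ _)).
by rewrite exprS -mulrA; apply: ler_wpM2l.
Qed.

Lemma comp_far i t k : P i -> N (it (t + k) i - it t i) <= E * (q ^+ t - q ^+ (t + k)).
Proof.
move=> Pi; elim: k => [|k IH]; first by rewrite addn0 !subrr normr0 mulr0.
rewrite addnS.
have -> : it (t+k).+1 i - it t i = (it (t+k).+1 i - it (t+k) i) + (it (t+k) i - it t i).
  by rewrite addrA subrK.
apply: (le_trans (NN_add _ _)).
have h2 := le_trans (term_le_S _ _ _ Pi) (it_step (t + k)).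
suff -> : E * (q ^+ t - q ^+ (t + k).+1) = q ^+ (t + k) * M + E * (q ^+ t - q ^+ (t + k)).
  by apply: lerD.
rewrite /E exprS; field; rewrite subr_eq0; apply/eqP => h; move: hq1; rewrite -h ltxx.
by [].
Qed.

Lemma comp_tail i t s : P i -> (t <= s)%N -> N (it s i - it t i) <= E * q ^+ t.
Proof.
move=> Pi ts; rewrite -(subnKC ts); apply: (le_trans (comp_far _ _ _ Pi)).
apply: ler_wpM2l; first exact: E_ge0.
by rewrite lerBlDr lerDl exprn_ge0.
Qed.

Lemma it_cvg i : P i -> cvg ((fun t => it t i) @ \oo).
Proof.
move=> Pi; apply: cauchy_cvg; apply: cauchy_exP => eps.
rewrite ltcE /= => /andP[/eqP imE reE].
have [t0 ht0] := geo_small q E _ hq0 hq1 reE.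
exists (it t0 i); apply: filterS (nbhs_infty_ge t0) => s hs.
rewrite -ball_normE /= ltcE Im_norm -imE eqxx /=.
by apply: le_lt_trans ht0; rewrite NN_sub; exact: comp_tail.
Qed.

Definition wlim i := lim ((fun t => it t i) @ \oo).

Lemma tail i t : P i -> N (wlim i - it t i) <= E * q ^+ t.
Proof.
move=> Pi; apply/ler_addgt0Pr => e e0.
have e0' : 0 < real_complex R e by rewrite ltcR.
have /cvgrPdist_lt /(_ _ e0') /(near_ex _ t) [s [ts hs]] := it_cvg _ Pi.
have -> : wlim i - it t i = (wlim i - it s i) + (it s i - it t i) by rewrite addrA subrK.
apply: le_trans; first exact: NN_add.
rewrite addrC; apply: lerD; first exact: comp_tail.
by move: hs; rewrite ltcE => /andP[_ /ltW].
Qed.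

Lemma fixp i : P i -> wlim i = Phi wlim i.
Proof.
move=> Pi; apply/eqP; rewrite -subr_eq0; apply/eqP/NN_eq0.
pose a := N (wlim i - Phi wlim i); rewrite -/a.
pose Np := \sum_(j | P j) (1 : R).
pose K := E * q + q * (E * Np).
have hb t : a <= K * q ^+ t.
  rewrite /a; have -> : wlim i - Phi wlim i = (wlim i - it t.+1 i) + (it t.+1 i - Phi wlim i).
    by rewrite addrA subrK.
  apply: le_trans; first exact: NN_add.
  have h1 := tail _ t.+1 Pi.
  have h2 : N (it t.+1 i - Phi wlim i) <= q * (E * q ^+ t * Np).
    rewrite /it iterS -/(it t).
    apply: le_trans; first exact: (term_le_S _ _ _ Pi).
    apply: le_trans; first exact: Phi_contr.
    apply: ler_wpM2l => //; rewrite /Np mulr_sumr; apply: ler_sum => j Pj.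
    by rewrite mulr1 NN_sub; exact: tail.
  apply: le_trans; first exact: lerD h1 h2.
  by rewrite /K exprS le_eqVlt; apply/orP; left; apply/eqP; ring.
rewrite leNgt; apply/negP => a0.
have [t ht] := geo_small q K _ hq0 hq1 a0.
by move: (lt_le_trans ht (hb t)); rewrite ltxx.
Qed.

Lemma neumann : exists w : forall i, X i,
  forall i, P i -> w i = b i + \sum_(j | P j) T i j (w j).
Proof. by exists wlim => i Pi; exact: fixp. Qed.

End Neumann.

Section Misc.
Context {R : realType}.
Local Notation C := R[i].
Local Notation N x := (complex.Re `|x|).

Lemma ex_ub (I : eqType) (s : seq I) (f : I -> R) : (forall j, j \in s -> f j < 1) ->
  exists q, [/\ 0 <= q, q < 1 & forall j, j \in s -> f j <= q].
Proof.
elim: s => [|a s IH] h; first by exists 0; split => //.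
have [q [q0 q1 hq]] : exists q, [/\ 0 <= q, q < 1 & forall j, j \in s -> f j <= q].
  by apply: IH => j js; apply: h; rewrite inE js orbT.
exists (Num.max q (f a)); split.
- by rewrite le_max q0.
- by rewrite gt_max q1 h // inE eqxx.
- move=> j; rewrite inE => /orP[/eqP ->|js]; first by rewrite le_max lexx orbT.
  by rewrite le_max hq.
Qed.

Lemma Re_realM (a : R) (v : C) : complex.Re (real_complex R a * v) = a * complex.Re v.
Proof. by case: v => p q /=; rewrite mul0r subr0. Qed.

Lemma N_realC (a : R) : complex.Re `|real_complex R a| = `|a|.
Proof. by rewrite normc_def /= expr0n /= addr0 sqrtr_sqr. Qed.

Lemma normC_real (a : R) : `|real_complex R a| = real_complex R `|a|.
Proof. by rewrite normc_def /= expr0n /= addr0 sqrtr_sqr. Qed.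

Lemma lin_0 {V W : normedModType C} (F : V -> W) :
  (forall (a : C) u v, F (a *: u + v) = a *: F u + F v) -> F 0 = 0.
Proof.
move=> hF; have := hF 1 0 0; rewrite !scale1r !addr0 => h.
by apply: (addrI (F 0)); rewrite addr0 -h.
Qed.

Lemma opnorm_ge0 {V W : normedModType C} (F : V -> W) : F 0 = 0 -> (0 <= opnorm F)%E.
Proof.
move=> F0; apply: ereal_sup_ubound; exists 0 => /=; first by rewrite normr0.
by rewrite F0 normr0.
Qed.

Lemma opnorm_bound {V W : normedModType C} (F : V -> W) (L : R) :
  (forall (a : C) u v, F (a *: u + v) = a *: F u + F v) ->
  opnorm F = L%:E -> forall u, N (F u) <= L * N u.
Proof.
move=> hF hL u.
have FZ (a : C) v : F (a *: v) = a *: F v by rewrite -[a *: v]addr0 hF lin_0 // addr0.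
have [u0|u0] := eqVneq u 0.
  have L0 : 0 <= L by rewrite -lee_fin -hL; apply: opnorm_ge0; exact: lin_0.
  by rewrite u0 lin_0 // !normr0 /= mulr0.
have r0 : 0 < N u.
  rewrite lt_def NN_ge0 andbT; apply/negP => /eqP h; move/eqP: u0; apply.
  by apply: NN_eq0; rewrite h.
pose v := real_complex R (N u)^-1 *: u.
have nv : `|v| = 1.
  rewrite /v normrZ (normCE u) normC_real ger0_norm; last by rewrite invr_ge0 ltW.
  by rewrite -rmorphM mulVf ?gt_eqF.
have : ((N (F v))%:E <= opnorm F)%E.
  by apply: ereal_sup_ubound; exists v => //=; rewrite nv.
rewrite hL lee_fin /v FZ NN_Z N_realC ger0_norm; last by rewrite invr_ge0 ltW.
by rewrite -ler_pdivlMl ?invr_gt0 // invrK mulrC.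
Qed.

End Misc.

Section Main.
Context {R : realType}.
Local Notation C := R[i].
Local Notation N x := (complex.Re `|x|).
Variables (n : nat) (X : 'I_n -> completeNormedModType C)
  (A : forall i j : 'I_n, X j -> X i) (D : forall i j : 'I_n, set (X j)).
Hypothesis hlin : forall i j, lin_on (A i j) (D i j).
Hypothesis hdom : forall i j, i != j -> D j j `<=` D i j.
Variables (c d : 'I_n -> 'I_n -> R).
Hypothesis hc0 : forall i j, i != j -> 0 <= c i j.
Hypothesis hd0 : forall i j, i != j -> 0 <= d i j.
Hypothesis hrel : forall i j, i != j -> forall x, D j j x ->
     `|A i j x| <= real_complex R (c i j) * `|A j j x| + real_complex R (d i j) * `|x|.
Variable lam : C.
Hypothesis hres : forall j, ~ spec1 (A j j) (Dd D j) lam.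

Definition Rs j (y : X j) : X j := resolv (A j j) (Dd D j) lam y.
Definition K i j (y : X j) : X i := A i j (Rs j y).

Lemma Rs_dom j y : D j j (Rs j y). Proof. by apply: res_dom; exact: hres. Qed.
Lemma Rs_eq j y : lam *: Rs j y - A j j (Rs j y) = y.
Proof. by apply: res_eq; exact: hres. Qed.
Lemma Rs_inv j x : D j j x -> Rs j (lam *: x - A j j x) = x.
Proof. by apply: res_inv; exact: hres. Qed.
Lemma Rs_lin j (a : C) u v : Rs j (a *: u + v) = a *: Rs j u + Rs j v.
Proof. by apply: res_lin; [exact: hlin | exact: hres]. Qed.

Lemma A_lin i j (a : C) x y : D j j x -> D j j y -> A i j (a *: x + y) = a *: A i j x + A i j y.
Proof.
move=> dx dy; have [eij|ij] := eqVneq i j.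
  by subst j; case: (hlin i i) => _ [_ h]; apply: h.
by case: (hlin i j) => _ [_ h]; apply: h; apply: (hdom _ _ ij).
Qed.

Lemma K_lin i j (a : C) u v : K i j (a *: u + v) = a *: K i j u + K i j v.
Proof. by rewrite /K Rs_lin A_lin //; exact: Rs_dom. Qed.

Lemma K_sum i j (I : Type) (r : seq I) (P : pred I) (F : I -> X j) :
  K i j (\sum_(k <- r | P k) F k) = \sum_(k <- r | P k) K i j (F k).
Proof.
have Kadd : {morph K i j : u v / u + v}.
  by move=> u v; rewrite -[u]scale1r K_lin !scale1r.
have K0 : K i j 0 = 0 by apply: lin_0; exact: K_lin.
exact: (big_morph (K i j) Kadd K0).
Qed.

Lemma K_sub i j u v : K i j (u - v) = K i j u - K i j v.
Proof. by rewrite addrC -scaleN1r K_lin scaleN1r addrC. Qed.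

Lemma NC_ge0 (z : C) : 0 <= N z.
Proof. by have := Re_le (normr_ge0 z); rewrite raddf0. Qed.

Variable cr : 'I_n -> R.
Hypothesis hcr0 : forall j, 0 <= cr j.
Hypothesis hcr : forall j y, N (Rs j y) <= cr j * N y.

Definition Bk i j := c i j * (N lam * cr j + 1) + d i j * cr j.

Lemma Bk_ge0 i j : i != j -> 0 <= Bk i j.
Proof.
move=> ij; rewrite /Bk; apply: addr_ge0; apply: mulr_ge0; rewrite ?hc0 ?hd0 ?hcr0 //.
by apply: addr_ge0 => //; apply: mulr_ge0; rewrite ?NC_ge0 ?hcr0.
Qed.

Lemma K_bound i j : i != j -> forall u, N (K i j u) <= Bk i j * N u.
Proof.
move=> ij u; rewrite /K; set x := Rs j u.
have h := Re_le (hrel _ _ ij _ (Rs_dom j u)); rewrite -/x raddfD /= !Re_realM in h.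
have Ax : A j j x = lam *: x - u.
  by have := Rs_eq j u; rewrite -/x => hu; rewrite -hu opprB addrC subrK.
have hA : N (A j j x) <= N lam * N x + N u.
  by rewrite Ax -NN_Z -(NN_N u); exact: NN_add.
have hx := hcr j u; rewrite -/x in hx.
apply: le_trans h _.
have e1 : c i j * N (A j j x) <= c i j * (N lam * (cr j * N u) + N u).
  apply: ler_wpM2l; first exact: hc0.
  apply: le_trans hA _; apply: lerD => //; apply: ler_wpM2l => //; exact: NC_ge0.
have e2 : d i j * N x <= d i j * (cr j * N u) by apply: ler_wpM2l => //; exact: hd0.
apply: le_trans (lerD e1 e2) _; rewrite /Bk le_eqVlt; apply/orP; left; apply/eqP; ring.
Qed.

Variable m : 'I_n.
Definition T i j (y : X j) : X i := K i m (K m j y) + (i != j)%:R *: K i j y.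

Lemma T_lin i j (a : C) u v : T i j (a *: u + v) = a *: T i j u + T i j v.
Proof.
rewrite /T !K_lin !scalerDr !scalerA (mulrC _ a) -!scalerA.
by rewrite -!addrA; congr (_ + _); rewrite addrCA.
Qed.

Lemma Core (z : forall j, X j) i : i != m ->
  \sum_(j | j != i) K i j (z j) =
  K i m (z m - \sum_(j | j != m) K m j (z j)) + \sum_(j | j != m) T i j (z j).
Proof.
move=> im; rewrite K_sub K_sum /T big_split /= addrA subrK.
rewrite (bigD1 m) /=; last by rewrite eq_sym.
congr (_ + _); rewrite [RHS](bigD1 i) //= eqxx scale0r add0r.
apply: eq_big => [j|j /andP[ji _]]; first by rewrite andbC.
by rewrite eq_sym ji scale1r.
Qed.

Lemma L1 (x : forall j, X j) : (forall j, D j j (x j)) -> forall i,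
  lam *: x i - \sum_(j | predT j) A i j (x j) =
  (lam *: x i - A i i (x i)) - \sum_(j | j != i) K i j (lam *: x j - A j j (x j)).
Proof.
move=> dx i; rewrite (bigD1 i) //= opprD addrA; congr (_ - _).
by apply: eq_bigr => j _; rewrite /K Rs_inv.
Qed.

Hypothesis hR : forall j, j != m -> (Rkj A D m j lam < 1)%E.

Lemma RkjE j : Rkj A D m j lam = (\sum_(i < n | i != m) opnorm (T i j))%E.
Proof. by []. Qed.

Lemma T0 i j : T i j 0 = 0.
Proof. apply: lin_0; exact: T_lin. Qed.

Definition Lm i j := fine (opnorm (T i j)).

Lemma LmE i j : i != m -> j != m -> opnorm (T i j) = (Lm i j)%:E.
Proof.
move=> im jm; rewrite /Lm fineK // ge0_fin_numE; last exact: opnorm_ge0 (T0 i j).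
apply: (le_lt_trans _ (lt_trans (hR _ jm) (ltry 1))).
rewrite RkjE (bigD1 i) //=; apply: leeDl; apply: sume_ge0 => k _.
exact: opnorm_ge0 (T0 k j).
Qed.

Lemma Lm_ge0 i j : i != m -> j != m -> 0 <= Lm i j.
Proof. by move=> im jm; rewrite -lee_fin -LmE //; exact: opnorm_ge0 (T0 i j). Qed.

Lemma Lm_sum j : j != m -> \sum_(i | i != m) Lm i j < 1.
Proof.
move=> jm; rewrite -lte_fin -sumEFin.
by rewrite -(eq_bigr _ (fun i im => LmE _ _ im jm)); exact: (hR _ jm).
Qed.

Lemma T_bound i j u : i != m -> j != m -> N (T i j u) <= Lm i j * N u.
Proof. move=> im jm; apply: opnorm_bound; [exact: T_lin | exact: LmE]. Qed.

Variable q : R.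
Hypothesis hq : forall j, j != m -> \sum_(i | i != m) Lm i j <= q.
Hypothesis hq0 : 0 <= q.
Hypothesis hq1 : q < 1.

Definition app (x : forall j, X j) i := lam *: x i - \sum_(j | predT j) A i j (x j).

Lemma app_z (z : forall j, X j) i :
  app (fun j => Rs j (z j)) i = z i - \sum_(j | j != i) K i j (z j).
Proof.
rewrite /app L1; last by move=> j; exact: Rs_dom.
rewrite Rs_eq; congr (_ - _); apply: eq_bigr => j _; by rewrite Rs_eq.
Qed.

Lemma exist_sol (y : forall i, X i) : exists x : forall i, X i,
  (forall j, D j j (x j)) /\ forall i, app x i = y i.
Proof.
pose b := fun i => y i + K i m (y m).
have [w hw] := @neumann R n (fun i => i != m) X T Lm q T_lin
  (fun i j u im jm => T_bound i j u im jm) hq hq0 hq1 b.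
pose z := @eqtype.dfwith _ (fun j => X j : Type) w m (y m + \sum_(j | j != m) K m j (w j)).
have zE j : j != m -> z j = w j by move=> jm; rewrite /z dfwith_out // eq_sym.
have zm : z m = y m + \sum_(j | j != m) K m j (w j) by rewrite /z dfwith_in.
have zs : z m - \sum_(j | j != m) K m j (z j) = y m.
  by rewrite zm (eq_bigr _ (fun j jm => congr1 (K m j) (zE j jm))) addrK.
exists (fun j => Rs j (z j)); split; first by move=> j; exact: Rs_dom.
move=> i; rewrite app_z; have [eim|im] := eqVneq i m; first by subst i.
rewrite Core // zs (eq_bigr _ (fun j jm => congr1 (T i j) (zE j jm))).
by rewrite zE // hw // /b -[y i + _ + _]addrA addrK.
Qed.

Lemma apriori : exists kap : R, forall x, (forall j, D j j (x j)) ->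
  \sum_i N (x i) <= kap * \sum_i N (app x i).
Proof.
pose Cb := \sum_(i | i != m) (1 + Bk i m).
pose Bm := \sum_(j | j != m) Bk m j.
pose W0 := 1 + (1 + Bm) * (Cb / (1 - q)).
exists ((\sum_j cr j) * W0) => x dx.
pose z := fun j => lam *: x j - A j j (x j).
have hxj j : N (x j) <= cr j * N (z j).
  by rewrite -{1}(Rs_inv _ _ (dx j)); exact: hcr.
pose y := app x.
have happ i : y i = z i - \sum_(j | j != i) K i j (z j) by rewrite /y /app L1.
pose Y := \sum_i N (y i).
have Y0 : 0 <= Y by apply: sumr_ge0 => i _; exact: NN_ge0.
have hyi i : N (y i) <= Y.
  by rewrite /Y (bigD1 i) //= lerDl; apply: sumr_ge0 => k _; exact: NN_ge0.
have hym : y m = z m - \sum_(j | j != m) K m j (z j) := happ m.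
have G2 i : i != m -> z i = (y i + K i m (y m)) + \sum_(j | j != m) T i j (z j).
  move=> im; rewrite happ Core // -hym.
  by rewrite -[_ + _ + _]addrA subrK.
pose Z := \sum_(i | i != m) N (z i).
have Z0 : 0 <= Z by apply: sumr_ge0 => i _; exact: NN_ge0.
have hzZ j : j != m -> N (z j) <= Z.
  by move=> jm; rewrite /Z (bigD1 j) //= lerDl; apply: sumr_ge0 => k _; exact: NN_ge0.
have hzi i : i != m -> N (z i) <= (1 + Bk i m) * Y + \sum_(j | j != m) Lm i j * N (z j).
  move=> im; rewrite {1}(G2 i im).
  apply: le_trans; first exact: NN_add.
  apply: lerD.
    apply: le_trans; first exact: NN_add.
    rewrite mulrDl mul1r; apply: lerD; first exact: hyi.
    apply: le_trans; first exact: (K_bound _ _ im).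
    by apply: ler_wpM2l; [exact: Bk_ge0 | exact: hyi].
  apply: le_trans; first exact: NN_sum.
  by apply: ler_sum => j jm; exact: T_bound.
have hZ : Z <= Cb * Y + q * Z.
  apply: le_trans; first exact: (ler_sum _ hzi).
  rewrite big_split /= -mulr_suml; apply: lerD => //.
  rewrite exchange_big /= /Z mulr_sumr; apply: ler_sum => j jm.
  rewrite -mulr_suml; apply: ler_wpM2r; first exact: NN_ge0.
  exact: hq.
have q1' : 0 < 1 - q by rewrite subr_gt0.
have hZ' : Z <= Cb / (1 - q) * Y.
  rewrite mulrAC ler_pdivlMr //; move: hZ; nra.
have Bm0 : 0 <= Bm by apply: sumr_ge0 => j jm; apply: Bk_ge0; rewrite eq_sym.
have hzm : N (z m) <= Y + Bm * Z.
  have -> : z m = y m + \sum_(j | j != m) K m j (z j) by rewrite hym subrK.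
  apply: le_trans; first exact: NN_add.
  apply: lerD => //; apply: le_trans; first exact: NN_sum.
  rewrite /Bm mulr_suml; apply: ler_sum => j jm.
  have mj : m != j by rewrite eq_sym.
  apply: le_trans; first exact: (K_bound _ _ mj).
  by apply: ler_wpM2l; [exact: Bk_ge0 | exact: hzZ].
have hzW j : N (z j) <= W0 * Y.
  have h : N (z j) <= Y + (1 + Bm) * Z.
    have [->|jm] := eqVneq j m.
      by apply: le_trans hzm _; rewrite mulrDl mul1r; lra.
    apply: le_trans (hzZ j jm) _; rewrite mulrDl mul1r.
    by have := mulr_ge0 Bm0 Z0; lra.
  apply: le_trans h _.
  have -> : W0 * Y = Y + (1 + Bm) * (Cb / (1 - q) * Y) by rewrite /W0; ring.
  by rewrite lerD2l; apply: ler_wpM2l; [exact: addr_ge0 | exact: hZ'].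
change (\sum_i N (x i) <= (\sum_j cr j) * W0 * Y).
rewrite -mulrA mulr_suml; apply: ler_sum => j _.
by apply: le_trans (hxj j) _; apply: ler_wpM2l.
Qed.

Lemma sumN_C (a : forall i, X i) :
  \sum_(i | predT i) `|a i| = real_complex R (\sum_i N (a i)).
Proof. by rewrite raddf_sum; apply: eq_bigr => i _; exact: normCE. Qed.

Lemma app_sub x y : (forall j, D j j (x j)) -> (forall j, D j j (y j)) ->
  forall i, app (fun j => x j - y j) i = app x i - app y i.
Proof.
move=> dx dy i; rewrite /app.
have h j : A i j (x j - y j) = A i j (x j) - A i j (y j).
  by rewrite addrC -scaleN1r A_lin // scaleN1r addrC.
rewrite (eq_bigr _ (fun j _ => h j)) sumrB scalerBr.
by rewrite !opprB addrACA [RHS]addrACA; congr (_ + _); exact: addrC.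
Qed.

Lemma not_sigma : ~ sigmaA A D lam.
Proof.
have [kap hkap] := apriori.
move=> h; apply: h; split.
- move=> x y dx dy heq i _.
  have dx' j : D j j (x j) by exact: dx.
  have dy' j : D j j (y j) by exact: dy.
  have dw j : D j j (x j - y j).
    case: (hlin j j) => _ [hD _]; rewrite addrC -scaleN1r; exact: hD.
  have := hkap _ dw.
  have -> : \sum_i N (app (fun j => x j - y j) i) = 0.
    apply: big1 => k _; rewrite app_sub // /app heq // subrr normr0 //.
  rewrite mulr0 => hs; apply/eqP; rewrite -subr_eq0; apply/eqP; apply: NN_eq0.
  apply: le_trans hs; rewrite (bigD1 i) //= lerDl.
  by apply: sumr_ge0 => k _; exact: NN_ge0.
- move=> y; have [x [dx hx]] := exist_sol y.
  by exists x => [i _|i _]; [exact: dx | exact: hx].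
- exists (real_complex R kap) => x dx.
  rewrite !sumN_C -rmorphM lecR; apply: hkap => j; exact: dx.
Qed.

End Main.

Theorem theorem5p5 (R : realType) (n : nat) (hn : (2 <= n)%N)
  (X : 'I_n -> completeNormedModType R[i])
  (A : forall i j : 'I_n, X j -> X i) (D : forall i j : 'I_n, set (X j))
  (hlin : forall i j, lin_on (A i j) (D i j))
  (hclosed : forall i, closed_op (A i i) (D i i))
  (hdom : forall i j, i != j -> D j j `<=` D i j)
  (c d : 'I_n -> 'I_n -> R)
  (hc0 : forall i j, i != j -> 0 <= c i j)
  (hd0 : forall i j, i != j -> 0 <= d i j)
  (hrel : forall i j, i != j -> forall x, D j j x ->
     `|A i j x| <= real_complex R (c i j) * `|A j j x| + real_complex R (d i j) * `|x|)
  (hcsum : forall j, \sum_(i < n | i != j) c i j < 1) :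
  sigmaA A D `<=` \bigcap_(m in I0 A D) Sk A D m.
Proof.
move=> lam hsig m _.
have [//|hno] := pselect (Sk A D m lam).
exfalso.
have hall j : j != m -> ~ Skj A D m j lam.
  by move=> jm hj; apply: hno; exists j => //=.
have [j0 j0m] : exists j0 : 'I_n, j0 != m.
  case: m {hno hall} => [[|k] hk].
    by exists (@Ordinal n 1 hn); rewrite -val_eqE.
  by exists (@Ordinal n 0 (leq_trans (ltnSn 0) (ltnW hn))); rewrite -val_eqE.
have hres j : ~ spec1 (A j j) (Dd D j) lam.
  have [->|jm] := eqVneq j m.
    by move=> hs; apply: (hall j0 j0m); left; left.
  by move=> hs; apply: (hall j jm); left; right.
have hR j : j != m -> (Rkj A D m j lam < 1)%E.
  move=> jm; rewrite ltNge; apply/negP => h1; apply: (hall j jm); right.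
  by split; [exact: hres | split; [exact: hres | exact: h1]].
have /choice [cr hcr] : forall j, exists c0 : R, 0 <= c0 /\
    forall y, complex.Re `|Rs n X A D lam j y| <= c0 * complex.Re `|y|.
  move=> j; exact: res_bound (hres j).
have [q [q0 q1 hq]] : exists q : R, [/\ 0 <= q, q < 1 & forall j, j \in enum 'I_n ->
    (if j != m then \sum_(i | i != m) Lm n X A D lam m i j else 0) <= q].
  apply: ex_ub => j _; case: ifP => jm; last exact: ltr01.
  exact: (@Lm_sum R n X A D hlin hdom lam hres m hR j jm).
apply: (@not_sigma R n X A D hlin hdom c d hc0 hd0 hrel lam hres cr
  (fun j => (hcr j).1) (fun j => (hcr j).2) m hR q _ q0 q1 hsig).
by move=> j jm; have := hq j (mem_enum _ _); rewrite jm.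
Qed.
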